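(* Let $\phi:\mathbb{R}^d\to\mathbb{R}$ be differentiable and suppose there exist constants $0<m\le M$ such that $$m\|x-y\|^2\le [\nabla\phi(x)-\nabla\phi(y)]^T(x-y)\le M\|x-y\|^2\quad\text{for all }x,y\in\mathbb{R}^d.$$ Let $g:\mathbb{R}^d\to\mathbb{R}^d$ be a map with $\|\nabla\phi(x)-g(x)\|\le\epsilon_g$ for all $x\in\mathbb{R}^d$, and let $f:\mathbb{R}^d\to\mathbb{R}$ satisfy $|\phi(x)-f(x)|\le\epsilon_f$ for all $x$, where $\epsilon_g>0$ and $\epsilon_f\ge 0$. Let $x_k\in\mathbb{R}^d$ and let $s_k\in\mathbb{R}^d$, $s_k\neq 0$, be chosen such that $$s_k^T\left[g(x_k+s_k)-g(x_k)\right]\ge c\,\epsilon_g\|s_k\|$$ for some constant $c>2$. Setting $y_k=g(x_k+s_k)-g(x_k)$, we have $$\frac{s_k^Ty_k}{s_k^Ts_k}\ge\frac{c}{c+2}\,m,\qquad \frac{y_k^Ty_k}{s_k^Ty_k}\le\frac{c}{c-2}\,M.$$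
   Context: $\|\cdot\|$ denotes the Euclidean norm. Here $f$ and $g$ model noisy observations of $\phi$ and $\nabla\phi$. *)

(* Defs.v *)
From HB Require Import structures.
From mathcomp Require Import all_boot all_order all_algebra.
From mathcomp Require Import all_classical all_reals all_analysis.
Set Implicit Arguments. Unset Strict Implicit. Unset Printing Implicit Defensive.
Import Order.TTheory GRing.Theory Num.Theory.
Import numFieldNormedType.Exports.
Local Open Scope ring_scope.

Definition dotv {R : realType} {d : nat} (u v : 'rV[R]_d) : R :=
  \sum_(i < d) u 0 i * v 0 i.

(* Euclidean norm (note: the library's `|.| on matrices is the sup norm) *)
Definition enorm {R : realType} {d : nat} (u : 'rV[R]_d) : R :=
  Num.sqrt (dotv u u).

Definition grad {R : realType} {d : nat} (phi : 'rV[R]_d -> R) (x : 'rV[R]_d)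
  : 'rV[R]_d :=
  \row_(i < d) ('d phi x (delta_mx 0 i : 'rV[R]_d)).

(* Main.v *)
Require Import Defs.
From HB Require Import structures.
From mathcomp Require Import all_boot all_order all_algebra.
From mathcomp Require Import all_classical all_reals all_analysis.
From mathcomp Require Import ring lra.
Import Order.TTheory GRing.Theory Num.Theory.
Import numFieldNormedType.Exports.
Local Open Scope ring_scope.

Lemma dphi_grad (R : realType) d (phi : 'rV[R]_d -> R) p v :
  'd phi p v = dotv (grad phi p) v.
Proof.
rewrite {1}(row_sum_delta v) linear_sum /dotv; apply: eq_bigr => i _.
by rewrite linearZ /= mxE mulrC.
Qed.

Lemma hderiv (R : realType) d (phi : 'rV[R]_d -> R) x v t :
  differentiable phi (x + t *: v) ->
  is_derive t 1 (fun s : R => phi (x + s *: v)) (dotv (grad phi (x + t *: v)) v).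
Proof.
move=> dphi.
have E : (fun h : R => h^-1 *: (((fun s => phi (x + s *: v)) \o shift t) (h *: 1) - phi (x + t *: v)))
   = (fun h => h^-1 *: ((phi \o shift (x + t *: v)) (h *: v) - phi (x + t *: v))).
  apply/funext => h /=; congr (_ *: (phi _ - _)).
  by rewrite /shift /= [h *: 1]mulr1 scalerDl addrCA addrC.
split; first by rewrite /derivable E; exact: diff_derivable.
have -> : 'D_1 (fun s : R => phi (x + s *: v)) t = 'D_v phi (x + t *: v).
  by rewrite /derive E.
by rewrite deriveE // dphi_grad.
Qed.

Section Dot.
Variables (R : realType) (d : nat).
Implicit Types u v w : 'rV[R]_d.

Lemma dotvC u v : dotv u v = dotv v u.
Proof. by apply: eq_bigr => i _; rewrite mulrC. Qed.
Lemma dotvDl u v w : dotv (u + v) w = dotv u w + dotv v w.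
Proof. by rewrite /dotv -big_split; apply: eq_bigr => i _; rewrite !mxE mulrDl. Qed.
Lemma dotvZl a u v : dotv (a *: u) v = a * dotv u v.
Proof. by rewrite /dotv mulr_sumr; apply: eq_bigr => i _; rewrite !mxE mulrA. Qed.
Lemma dotvNl u v : dotv (- u) v = - dotv u v.
Proof. by rewrite -scaleN1r dotvZl mulN1r. Qed.
Lemma dotvBl u w v : dotv (u - w) v = dotv u v - dotv w v.
Proof. by rewrite dotvDl dotvNl. Qed.
Lemma dotvDr u v w : dotv u (v + w) = dotv u v + dotv u w.
Proof. by rewrite dotvC dotvDl !(dotvC u). Qed.
Lemma dotvZr a u v : dotv u (a *: v) = a * dotv u v.
Proof. by rewrite dotvC dotvZl dotvC. Qed.
Lemma dotvBr u v w : dotv u (v - w) = dotv u v - dotv u w.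
Proof. by rewrite dotvC dotvBl !(dotvC u). Qed.
Lemma dotv_ge0 u : 0 <= dotv u u.
Proof. by apply: sumr_ge0 => i _; rewrite -expr2 sqr_ge0. Qed.
Lemma enorm_sq u : enorm u ^+ 2 = dotv u u.
Proof. by rewrite /enorm sqr_sqrtr // dotv_ge0. Qed.
Lemma enorm_ge0 u : 0 <= enorm u.
Proof. exact: sqrtr_ge0. Qed.
Lemma dotv_eq0 u : dotv u u = 0 -> u = 0.
Proof.
move=> /eqP; rewrite psumr_eq0; last by move=> i _; rewrite -expr2 sqr_ge0.
move=> /allP H; apply/rowP => i; rewrite mxE.
have /H : i \in index_enum 'I_d by rewrite mem_index_enum.
by rewrite /= mulf_eq0 orbb => /eqP.
Qed.
Lemma CS u v : dotv u v <= enorm u * enorm v.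
Proof.
have [a0|apos] := eqVneq (enorm u) 0.
  have u0 : u = 0 by apply: dotv_eq0; rewrite -enorm_sq a0 expr0n.
  by rewrite a0 mul0r u0 /dotv big1 // => i _; rewrite mxE mul0r.
have [b0|bpos] := eqVneq (enorm v) 0.
  have v0 : v = 0 by apply: dotv_eq0; rewrite -enorm_sq b0 expr0n.
  by rewrite b0 mulr0 v0 /dotv big1 // => i _; rewrite mxE mulr0.
have H := dotv_ge0 (enorm v *: u - enorm u *: v).
rewrite !(dotvBl, dotvBr, dotvZl, dotvZr) -!enorm_sq (dotvC v u) in H.
have ha := enorm_ge0 u; have hb := enorm_ge0 v.
have hab : 0 < enorm u * enorm v.
  by rewrite mulr_gt0 // lt0r ?apos ?bpos.
nra.
Qed.
Lemma triangle u v : enorm (u + v) <= enorm u + enorm v.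
Proof.
have ha := enorm_ge0 u; have hb := enorm_ge0 v.
rewrite -(ler_pXn2r (_ : 0 < 2)%N) ?nnegrE ?addr_ge0 ?enorm_ge0 //.
rewrite enorm_sq dotvDl !dotvDr -!enorm_sq (dotvC v u).
have := CS u v; nra.
Qed.
End Dot.

Lemma arith_mvt (R : realType) (k2 c G K P Q : R) :
  P - (K * 1 + k2 * (1 * 1)) - (Q - (K * 0 + k2 * (0 * 0))) =
    (G - (K + k2 * (2 * c))) * (1 - 0) ->
  P - Q - K - k2 = G - K - k2 * (2 * c).
Proof. move=> H; lra. Qed.

Local Open Scope classical_set_scope.
Lemma breg_mvt (R : realType) d (phi : 'rV[R]_d -> R) (k2 : R) (x v : 'rV[R]_d) :
  (forall x, differentiable phi x) ->
  exists2 c : R, 0 < c < 1 &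
  phi (x + v) - phi x - dotv (grad phi x) v - k2 =
  dotv (grad phi (x + c *: v)) v - dotv (grad phi x) v - k2 * (2 * c).
Proof.
move=> dphi.
pose k1 := dotv (grad phi x) v.
pose D : R -> R := (fun s : R => phi (x + s *: v)) - (fun s : R => k1 * s + k2 * (s * s)).
have HD : forall t : R, is_derive t 1 D
    (dotv (grad phi (x + t *: v)) v - (k1 + k2 * (2 * t))).
  move=> t; apply: is_deriveB; first exact: hderiv.
  have -> : (fun s : R => k1 * s + k2 * (s * s)) = k1 \*: id + k2 \*: (id * id).
    by apply/funext => s.
  apply: is_derive_eq.
  by rewrite [k1%:A]mulr1 [t%:A]mulr1 /GRing.scale/=; lra.
have [c c01 Hc] : exists2 c, c \in `]0, 1[%R & D 1 - D 0 =
    (dotv (grad phi (x + c *: v)) v - (k1 + k2 * (2 * c))) * (1 - 0).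
  have H3 : {within `[0, 1], continuous D}.
    apply: derivable_within_continuous => t _.
    exact: (@ex_derive _ _ _ _ _ _ _ (HD t)).
  exact: (MVT ltr01 (fun t _ => HD t) H3).
move: c01; rewrite in_itv /= => c01.
exists c; first exact: c01.
have HD1 : D 1 = phi (x + v) - (k1 * 1 + k2 * (1 * 1)).
  by rewrite /D; change (phi (x + 1 *: v) - (k1 * 1 + k2 * (1 * 1)) = phi (x + v) - (k1 * 1 + k2 * (1 * 1))); rewrite scale1r.
have HD0 : D 0 = phi x - (k1 * 0 + k2 * (0 * 0)).
  by rewrite /D; change (phi (x + 0 *: v) - (k1 * 0 + k2 * (0 * 0)) = phi x - (k1 * 0 + k2 * (0 * 0))); rewrite scale0r addr0.
rewrite HD1 HD0 in Hc.
exact: (@arith_mvt R k2 c _ _ _ _ Hc).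
Qed.
Local Close Scope classical_set_scope.

Lemma line_eq (R : realType) d (x v : 'rV[R]_d) (c : R) : x + c *: v - x = c *: v.
Proof. by rewrite addrC addKr. Qed.

Lemma arith_up (R : realType) (M c G K P Q V : R) : 0 < c ->
  c * (G - K) <= M * (c * (c * V)) ->
  P - Q - K - M / 2 * V = G - K - M / 2 * V * (2 * c) ->
  P - Q - K <= M / 2 * V.
Proof.
move=> c0 H Hc.
have H' : G - K <= M * c * V.
  by rewrite -(ler_pM2l c0); nra.
nra.
Qed.

Lemma arith_lo (R : realType) (m c G K P Q V : R) : 0 < c -> 0 <= m -> 0 <= V ->
  m * (c * (c * V)) <= c * (G - K) ->
  P - Q - K - 0 = G - K - 0 * (2 * c) ->
  0 <= P - Q - K.
Proof.
move=> c0 m0 V0 H Hc.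
have H' : 0 <= G - K.
  rewrite -(pmulr_rge0 _ c0); apply: le_trans H; apply: mulr_ge0 => //.
  by apply: mulr_ge0; [exact: ltW|apply: mulr_ge0 => //; exact: ltW].
lra.
Qed.

Lemma breg_up (R : realType) d (phi : 'rV[R]_d -> R) (M : R) (x v : 'rV[R]_d) :
  (forall x, differentiable phi x) ->
  (forall x y, dotv (grad phi x - grad phi y) (x - y) <= M * enorm (x - y) ^+ 2) ->
  phi (x + v) - phi x - dotv (grad phi x) v <= M / 2 * dotv v v.
Proof.
move=> dphi Hup.
have [c /andP [c0 c1] Hc] := @breg_mvt R d phi (M / 2 * dotv v v) x v dphi.
have H := Hup (x + c *: v) x.
rewrite line_eq dotvZr enorm_sq dotvZl dotvZr dotvBl in H.
exact: (@arith_up R M c _ _ _ _ _ c0 H Hc).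
Qed.

Lemma breg_lo (R : realType) d (phi : 'rV[R]_d -> R) (m : R) (x v : 'rV[R]_d) :
  (forall x, differentiable phi x) -> 0 <= m ->
  (forall x y, m * enorm (x - y) ^+ 2 <= dotv (grad phi x - grad phi y) (x - y)) ->
  0 <= phi (x + v) - phi x - dotv (grad phi x) v.
Proof.
move=> dphi m0 Hlo.
have [c /andP [c0 c1] Hc] := @breg_mvt R d phi 0 x v dphi.
have H := Hlo (x + c *: v) x.
rewrite line_eq dotvZr enorm_sq dotvZl dotvZr dotvBl in H.
exact: (@arith_lo R m c _ _ _ _ _ c0 m0 (@dotv_ge0 R d v) H Hc).
Qed.

Lemma dotvNr (R : realType) d (u v : 'rV[R]_d) : dotv u (- v) = - dotv u v.
Proof. by rewrite dotvC dotvNl dotvC. Qed.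

Lemma addsub (R : realType) d (u w : 'rV[R]_d) : u + (w - u) = w.
Proof. by rewrite addrC subrK. Qed.

Lemma arith_half (R : realType) (M Minv Z X Y a p q r : R) :
  0 < M -> M * Minv = 1 -> r = q - p ->
  0 <= Z - X - (a - Minv * p) ->
  Z - Y + Minv * q <= M / 2 * (Minv * (Minv * r)) ->
  r <= 2 * M * (Y - X - a).
Proof.
move=> M0 MI rE L U.
have E : M / 2 * (Minv * (Minv * r)) = (M * Minv) * (Minv * r) / 2 by ring.
rewrite MI mul1r in E.
rewrite E in U.
have : Minv * r / 2 <= Y - X - a by rewrite rE in U *; lra.
move=> H.
have : M * (Minv * r / 2) <= M * (Y - X - a) by rewrite ler_pM2l.
have -> : M * (Minv * r / 2) = (M * Minv) * r / 2 by ring.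
rewrite MI mul1r; lra.
Qed.

Lemma half (R : realType) d (phi : 'rV[R]_d -> R) (m M : R) (x y : 'rV[R]_d) :
  (forall x, differentiable phi x) -> 0 <= m -> 0 < M ->
  (forall x y, m * enorm (x - y) ^+ 2 <= dotv (grad phi x - grad phi y) (x - y)) ->
  (forall x y, dotv (grad phi x - grad phi y) (x - y) <= M * enorm (x - y) ^+ 2) ->
  dotv (grad phi y - grad phi x) (grad phi y - grad phi x) <=
    2 * M * (phi y - phi x - dotv (grad phi x) (y - x)).
Proof.
move=> dphi m0 M0 Hlo Hup.
pose g := grad phi y - grad phi x.
pose z := y - M^-1 *: g.
have L := @breg_lo R d phi m x (z - x) dphi m0 Hlo.
have U := @breg_up R d phi M y (z - y) dphi Hup.
rewrite !addsub in L U.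
have E1 : z - x = (y - x) - M^-1 *: g by rewrite /z addrAC.
have E2 : z - y = - (M^-1 *: g) by rewrite /z addrAC subrr add0r.
rewrite E1 dotvBr dotvZr in L.
rewrite E2 dotvNr dotvZr dotvNl dotvNr !dotvZl dotvZr in U.
have MI : M * M^-1 = 1 by rewrite mulfV // gt_eqF.
have rE : dotv g g = dotv (grad phi y) g - dotv (grad phi x) g by rewrite {1}/g dotvBl.
rewrite !opprK in U.
exact: (@arith_half R M M^-1 _ _ _ _ _ _ _ M0 MI rE L U).
Qed.
Lemma arith_main (R : realFieldType) (m M c e S En P Y Ny Nb SA AA SS SE : R) :
  0 < m -> m <= M -> 0 < e -> 2 < c -> 0 < S -> SS = S ^+ 2 ->
  0 <= En -> En <= 2 * e -> c * e * S <= P ->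
  m * SS <= SA -> SA <= M * SS -> AA <= M * SA ->
  P = SA + SE -> SE <= S * En -> - SE <= S * En ->
  Ny <= Nb + En -> 0 <= Nb -> 0 <= Ny ->
  Nb ^+ 2 = AA - M * SA + M ^+ 2 / 4 * SS ->
  Ny ^+ 2 = Y - M * P + M ^+ 2 / 4 * SS ->
  c / (c + 2) * m <= P / SS /\ Y / P <= c / (c - 2) * M.
Proof.
move=> m0 mM e0 c2 S0 SSE En0 En2 HP HSA1 HSA2 HAA PE SE1 SE2 Hy Nb0 Ny0 Nb2 Ny2.
have SS0 : 0 < SS by rewrite SSE exprn_gt0.
have SEn : S * En <= 2 * e * S by nra.
have hP : m * SS - 2 * e * S <= P by lra.
have h1 : c * m * SS <= (c + 2) * P by nra.
have P0 : 0 < P by nra.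
have M0 : 0 < M by lra.
split.
  rewrite -subr_ge0.
  have -> : P / SS - c / (c + 2) * m = ((c + 2) * P - c * m * SS) / ((c + 2) * SS).
    by field; apply/andP; split; rewrite gt_eqF //; lra.
  apply: divr_ge0; first lra.
  apply: mulr_ge0; lra.
have hNb : Nb <= M * S / 2.
  have H : Nb ^+ 2 <= (M * S / 2) ^+ 2.
    rewrite Nb2; have -> : (M * S / 2) ^+ 2 = M ^+ 2 / 4 * SS by rewrite SSE; field.
    nra.
  have q0 : 0 <= M * S / 2 by apply: divr_ge0; [apply: mulr_ge0; lra|lra].
  by move: H; rewrite ler_pXn2r ?nnegrE.
have hNy : Ny <= M * S / 2 + 2 * e by lra.
have hY : Y - M * P <= 2 * M * S * e + 4 * e ^+ 2.
  have : Ny ^+ 2 <= (M * S / 2 + 2 * e) ^+ 2 by nra.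
  rewrite Ny2 SSE => H.
  have -> : 2 * M * S * e + 4 * e ^+ 2 = (M * S / 2 + 2 * e) ^+ 2 - M ^+ 2 / 4 * S ^+ 2 by field.
  lra.
have hPu : P <= M * SS + 2 * e * S by lra.
have hce : (c - 2) * e <= M * S.
  have : (c - 2) * e * S <= M * S * S by rewrite SSE in hPu; nra.
  move=> H; nra.
have key : (c - 2) * Y <= c * M * P by nra.
rewrite -subr_ge0.
have -> : c / (c - 2) * M - Y / P = (c * M * P - (c - 2) * Y) / ((c - 2) * P).
  by field; apply/andP; split; rewrite gt_eqF //; lra.
apply: divr_ge0; first lra.
apply: mulr_ge0; lra.
Qed.

Lemma arith_co (R : realType) (M r X Y a b : R) :
  r <= 2 * M * (Y - X - a) -> r <= 2 * M * (X - Y - - b) -> r <= M * (b - a).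
Proof. move=> H1 H2; nra. Qed.

Lemma cocoer (R : realType) d (phi : 'rV[R]_d -> R) (m M : R) (x y : 'rV[R]_d) :
  (forall x, differentiable phi x) -> 0 <= m -> 0 < M ->
  (forall x y, m * enorm (x - y) ^+ 2 <= dotv (grad phi x - grad phi y) (x - y)) ->
  (forall x y, dotv (grad phi x - grad phi y) (x - y) <= M * enorm (x - y) ^+ 2) ->
  dotv (grad phi y - grad phi x) (grad phi y - grad phi x) <=
    M * dotv (grad phi y - grad phi x) (y - x).
Proof.
move=> dphi m0 M0 Hlo Hup.
have H1 := @half R d phi m M x y dphi m0 M0 Hlo Hup.
have H2 := @half R d phi m M y x dphi m0 M0 Hlo Hup.
have E : grad phi x - grad phi y = - (grad phi y - grad phi x) by rewrite opprB.
have E' : x - y = - (y - x) by rewrite opprB.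
rewrite E E' dotvNl dotvNr opprK dotvNr in H2.
rewrite [X in _ <= M * X]dotvBl.
exact: (@arith_co R M _ _ _ _ _ H1 H2).
Qed.



Arguments dotvC {R d}.
Arguments dotvDl {R d}.
Arguments dotvZl {R d}.
Arguments dotvNl {R d}.
Arguments dotvBl {R d}.
Arguments dotvDr {R d}.
Arguments dotvZr {R d}.
Arguments dotvBr {R d}.
Arguments dotv_ge0 {R d}.
Arguments enorm_sq {R d}.
Arguments enorm_ge0 {R d}.
Arguments dotv_eq0 {R d}.
Arguments CS {R d}.
Arguments triangle {R d}.

Lemma zid (R : comRingType) d (g1 g0 G1 G0 : 'rV[R]_d) :
  (g1 - g0) - (G1 - G0) = (G0 - g0) - (G1 - g1).
Proof. by apply/rowP => i; rewrite !mxE; ring. Qed.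
Lemma zid2 (R : comRingType) d (y a s : 'rV[R]_d) : y - s = (a - s) + (y - a).
Proof. by apply/rowP => i; rewrite !mxE; ring. Qed.

Lemma nb_id (R : realType) d (a s : 'rV[R]_d) (M : R) :
  enorm (a - (M / 2) *: s) ^+ 2 = dotv a a - M * dotv a s + M ^+ 2 / 4 * dotv s s.
Proof.
rewrite enorm_sq !(dotvBl, dotvBr, dotvZl, dotvZr) (dotvC s a).
move: (dotv a a) (dotv a s) (dotv s s) => x y z; field; by rewrite ?pnatr_eq0.
Qed.

Lemma enormN (R : realType) d (u : 'rV[R]_d) : enorm (- u) = enorm u.
Proof. by rewrite /enorm dotvNl dotvNr opprK. Qed.

Theorem lemma3p1 (R : realType) (d : nat) (phi : 'rV[R]_d -> R)
  (f : 'rV[R]_d -> R) (g : 'rV[R]_d -> 'rV[R]_d)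
  (m M eps_g eps_f c : R) (xk sk : 'rV[R]_d) :
  (forall x, differentiable phi x) ->
  0 < m -> m <= M ->
  (forall x y, m * enorm (x - y) ^+ 2 <= dotv (grad phi x - grad phi y) (x - y)) ->
  (forall x y, dotv (grad phi x - grad phi y) (x - y) <= M * enorm (x - y) ^+ 2) ->
  0 < eps_g -> 0 <= eps_f ->
  (forall x, enorm (grad phi x - g x) <= eps_g) ->
  (forall x, `|phi x - f x| <= eps_f) ->
  2 < c ->
  sk != 0 ->
  c * eps_g * enorm sk <= dotv sk (g (xk + sk) - g xk) ->
  let yk := g (xk + sk) - g xk in
  c / (c + 2) * m <= dotv sk yk / dotv sk sk /\
  dotv yk yk / dotv sk yk <= c / (c - 2) * M.
Proof.
move=> dphi m0 mM Hlo Hup e0 _ Hg _ c2 sk0 Hs yk.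
have M0 : 0 < M by apply: lt_le_trans mM.
pose a := grad phi (xk + sk) - grad phi xk.
pose e := yk - a.
have Eks : xk + sk - xk = sk by rewrite addrC addKr.
have Hco := @cocoer R d phi m M xk (xk + sk) dphi (ltW m0) M0 Hlo Hup.
rewrite Eks -/a in Hco.
have Hl := Hlo (xk + sk) xk; rewrite Eks -/a enorm_sq in Hl.
have Hu := Hup (xk + sk) xk; rewrite Eks -/a enorm_sq in Hu.
have Ee : e = (grad phi xk - g xk) - (grad phi (xk + sk) - g (xk + sk)).
  by rewrite /e /yk /a; exact: zid.
have HEn : enorm e <= 2 * eps_g.
  rewrite Ee; apply: le_trans (triangle _ _) _; rewrite enormN.
  have := Hg xk; have := Hg (xk + sk); lra.
have S0 : 0 < enorm sk.
  rewrite lt0r enorm_ge0 andbT; apply/eqP => H.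
  move/eqP: sk0; apply; apply: dotv_eq0; by rewrite -enorm_sq H expr0n.
have Ey : yk = a + e by rewrite /e addrC subrK.
have PE : dotv sk yk = dotv a sk + dotv sk e by rewrite {1}Ey dotvDr dotvC.
have SE1 := CS sk e.
have SE2 := CS sk (- e); rewrite dotvNr enormN in SE2.
have Eball : yk - (M / 2) *: sk = (a - (M / 2) *: sk) + e.
  by rewrite /e; exact: zid2.
have Hball := triangle (a - (M / 2) *: sk) e; rewrite -Eball in Hball.
have Nb2 := @nb_id R d a sk M.
have Ny2 := @nb_id R d yk sk M; rewrite (dotvC yk sk) in Ny2.
exact: (@arith_main R m M c eps_g (enorm sk) (enorm e) (dotv sk yk) (dotv yk yk)
  _ _ (dotv a sk) (dotv a a) (dotv sk sk) (dotv sk e) m0 mM e0 c2 S0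
  (esym (enorm_sq sk)) (enorm_ge0 e) HEn Hs Hl Hu Hco PE SE1 SE2 Hball
  (enorm_ge0 _) (enorm_ge0 _) Nb2 Ny2).
Qed.
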